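(* Assume the Setup below and $|n-p-1|>1$. Then, almost surely: (1) for either choice $\hat\alpha=c$ (with $c_0=0$) or $\hat\alpha=c\,\mathrm{tr}(W)$ (with $c_0=c$), $\hat b_S\to\min\{(n-1)^2+(n-1)-2,\ p^2+p-2\}$ as $c\to0$; (2) as $c\to\infty$, $\hat b_S\to-2$ if $\hat\alpha=c$, and $\hat b_S\to0$ if $\hat\alpha=c\,\mathrm{tr}(W)$.
   Context: Setup. Let $n\ge 2$, $p\ge1$. Let $X=(x_1,\dots,x_n)$ be a random $p\times n$ matrix whose columns are independent with $x_i\sim\mathcal N_p(\theta_i,\Sigma)$, where $\Sigma$ is a known $p\times p$ positive definite matrix and $\Theta\in\mathbb R^{p\times n}$. Let $\bar x=n^{-1}\sum_j x_j$, $\bar X=\bar x\,1_n^\top$, and $W=(X-\bar X)(X-\bar X)^\top\Sigma^{-1}$. The ridge statistic is $\hat\alpha=c$ or $\hat\alpha=c\,\mathrm{tr}(W)$ with a constant $c>0$; correspondingly $c_0=0$ or $c_0=c$. Put $V=(W+\hat\alpha I_p)^{-1}$ and define the estimated weights $$\hat a_S=\frac{(n-p-1)\mathrm{tr}(V)+\hat\alpha(\mathrm{tr}V)^2}{\mathrm{tr}(V^2W)}-(2c_0+1),\qquad \hat b_S=\{(n-1)p-2\}-\mathrm{tr}(VW)\,\hat a_S.$$ *)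

(* Defs.v *)
(* the reals are modelled by an arbitrary real closed field. *)
From HB Require Import structures.
From mathcomp Require Import all_boot all_order all_algebra.
Set Implicit Arguments. Unset Strict Implicit. Unset Printing Implicit Defensive.
Import Order.TTheory GRing.Theory Num.Theory.
Local Open Scope ring_scope.

Definition posdef (R : realFieldType) (p : nat) (S : 'M[R]_p) : Prop :=
  S^T = S /\ forall v : 'cV[R]_p, v != 0 -> 0 < (v^T *m S *m v) 0 0.

(* X - Xbar, with Xbar = xbar 1_n^T = X (n^-1 1_n 1_n^T) *)
Definition centered (R : realFieldType) (p n : nat) (X : 'M[R]_(p, n)) : 'M[R]_(p, n) :=
  X - X *m (n%:R^-1 *: const_mx 1).

Definition Wmat (R : realFieldType) (p n : nat) (Sigma : 'M[R]_p) (X : 'M[R]_(p, n))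
  : 'M[R]_p :=
  centered X *m (centered X)^T *m invmx Sigma.

Definition Vmat (R : realFieldType) (p : nat) (W : 'M[R]_p) (alpha : R) : 'M[R]_p :=
  invmx (W + alpha%:M).

Definition aS (R : realFieldType) (n p : nat) (W : 'M[R]_p) (alpha c0 : R) : R :=
  let V := Vmat W alpha in
  ((n%:R - p%:R - 1) * (\tr V) + alpha * (\tr V) ^+ 2) / (\tr (V *m V *m W))
  - (2 * c0 + 1).
Arguments aS {R} n p W alpha c0.

Definition bS (R : realFieldType) (n p : nat) (W : 'M[R]_p) (alpha c0 : R) : R :=
  ((n%:R - 1) * p%:R - 2) - (\tr (Vmat W alpha *m W)) * aS n p W alpha c0.
Arguments bS {R} n p W alpha c0.

Definition lim0 (R : realFieldType) (f : R -> R) (L : R) : Prop :=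
  forall eps : R, 0 < eps -> exists2 delta : R, 0 < delta &
    forall c : R, 0 < c -> c < delta -> `|f c - L| < eps.

Definition liminfty (R : realFieldType) (f : R -> R) (L : R) : Prop :=
  forall eps : R, 0 < eps -> exists M : R,
    forall c : R, 0 < c -> M < c -> `|f c - L| < eps.

(* Main.v *)
Require Import Defs.
From HB Require Import structures.
From mathcomp Require Import all_boot all_order all_algebra.
From mathcomp Require Import ring lra zify.
From mathcomp Require Import spectral sesquilinear.
From mathcomp.real_closed Require Import complex.
Import Order.TTheory GRing.Theory Num.Theory.
Local Open Scope ring_scope.

Section Lim.
Context {R : realFieldType}.
Implicit Types (f g : R -> R) (L M : R).

Lemma lim0_ext f {g L} : (forall c, 0 < c -> f c = g c) -> lim0 f L -> lim0 g L.
Proof.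
move=> fg hf e e0; have [d d0 hd] := hf e e0; exists d => // c c0 cd.
by rewrite -fg //; apply: hd.
Qed.

Lemma lim0_cst a : lim0 (fun _ : R => a) a.
Proof. by move=> e e0; exists 1 => // c _ _; rewrite subrr normr0. Qed.

Lemma lim0_id : lim0 (fun c : R => c) 0.
Proof.
move=> e e0; exists e => // c c0 ce; rewrite subr0 ger0_norm //; exact: ltW.
Qed.

Lemma lim0_null f L : lim0 f L <-> lim0 (fun c => f c - L) 0.
Proof.
split=> h e e0; have [d d0 hd] := h e e0; exists d => // c c0 cd.
  by rewrite subr0; apply: hd.
by have := hd c c0 cd; rewrite subr0.
Qed.

Lemma lim0_add {f g L M} : lim0 f L -> lim0 g M -> lim0 (fun c => f c + g c) (L + M).
Proof.
move=> hf hg e e0.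
have e20 : 0 < e / 2 by rewrite divr_gt0.
have [d1 d10 h1] := hf _ e20; have [d2 d20 h2] := hg _ e20.
exists (Num.min d1 d2); first by rewrite lt_min d10 d20.
move=> c c0; rewrite lt_min => /andP[c1 c2].
have := h1 c c0 c1; have := h2 c c0 c2.
rewrite !ltr_norml => /andP[a1 a2] /andP[b1 b2].
apply/andP; split; lra.
Qed.

Lemma lim0_nullM {f g} : lim0 f 0 -> lim0 g 0 -> lim0 (fun c => f c * g c) 0.
Proof.
move=> hf hg e e0.
have [d1 d10 h1] := hf _ e0; have [d2 d20 h2] := hg _ ltr01.
exists (Num.min d1 d2); first by rewrite lt_min d10 d20.
move=> c c0; rewrite lt_min => /andP[c1 c2].
have := h1 c c0 c1; have := h2 c c0 c2; rewrite !subr0 normrM => a b.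
have := normr_ge0 (f c); have := normr_ge0 (g c); nra.
Qed.

Lemma lim0_scal a {f} : lim0 f 0 -> lim0 (fun c => a * f c) 0.
Proof.
move=> hf e e0.
have e1 : 0 < e / (`|a| + 1) by rewrite divr_gt0 // ltr_wpDl.
have [d d0 h] := hf _ e1; exists d => // c c0 cd.
have := h c c0 cd; rewrite !subr0 normrM ltr_pdivlMr ?ltr_wpDl // => H.
have := normr_ge0 (f c); have := normr_ge0 a; nra.
Qed.

Lemma lim0_mul {f g L M} : lim0 f L -> lim0 g M -> lim0 (fun c => f c * g c) (L * M).
Proof.
move=> /lim0_null hf /lim0_null hg; apply/lim0_null.
have := lim0_add (lim0_add (lim0_nullM hf hg) (lim0_scal L hg)) (lim0_scal M hf).
rewrite !addr0; apply: lim0_ext => c _; ring.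
Qed.

Lemma lim0_inv {f L} : L != 0 -> lim0 f L -> lim0 (fun c => (f c)^-1) L^-1.
Proof.
move=> L0 hf e e0.
have aL : 0 < `|L| by rewrite normr_gt0.
have e1 : 0 < Num.min (`|L| / 2) (e * `|L| ^+ 2 / 2).
  by rewrite lt_min !divr_gt0 ?mulr_gt0 ?exprn_gt0.
have [d d0 h] := hf _ e1; exists d => // c c0 cd.
have := h c c0 cd; rewrite lt_min => /andP[h1 h2].
have fL : `|L| / 2 < `|f c|.
  have := ler_dist_dist (f c) L; rewrite ler_norml => /andP[u1 u2]; lra.
have fc0 : f c != 0 by rewrite -normr_gt0; apply: lt_trans fL; rewrite divr_gt0.
have -> : (f c)^-1 - L^-1 = (L - f c) / (f c * L) by field; rewrite fc0 L0.
rewrite normrM normfV normrM distrC ltr_pdivrMr ?mulr_gt0 ?normr_gt0 //.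
have : e * `|L| ^+ 2 / 2 <= e * (`|f c| * `|L|).
  rewrite -mulrA ler_pM2l // expr2 mulrAC ler_pM2r //; lra.
lra.
Qed.


Lemma lim0_sum (I : Type) (s : seq I) (F : I -> R -> R) (Ls : I -> R) :
  (forall i, lim0 (F i) (Ls i)) ->
  lim0 (fun c => \sum_(i <- s) F i c) (\sum_(i <- s) Ls i).
Proof.
move=> h; elim: s => [|x s IH].
  by apply: (lim0_ext (fun _ => 0)) => [c _|]; rewrite ?big_nil //; exact: lim0_cst.
apply: (lim0_ext (fun c => F x c + \sum_(i <- s) F i c)) => [c _|].
  by rewrite big_cons.
rewrite big_cons; exact: lim0_add.
Qed.

Lemma lim0_eq {f} L L' : L = L' -> lim0 f L -> lim0 f L'.
Proof. by move=> ->. Qed.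

Lemma lim0_scale {f L} m : 0 < m -> lim0 f L -> lim0 (fun c => f (c * m)) L.
Proof.
move=> m0 hf e e0; have [d d0 h] := hf e e0.
exists (d / m); first by rewrite divr_gt0.
move=> c c0 cd; apply: h; first by rewrite mulr_gt0.
by rewrite -ltr_pdivlMr.
Qed.

Lemma liminfty_lim0 {f L} : lim0 (fun t => f t^-1) L -> liminfty f L.
Proof.
move=> hf e e0; have [d d0 h] := hf e e0.
exists d^-1 => c c0 cd.
have := h c^-1; rewrite invrK; apply; first by rewrite invr_gt0.
by rewrite -(invrK d) ltf_pV2 ?posrE ?invr_gt0.
Qed.


Lemma lim0_opp {f L} : lim0 f L -> lim0 (fun c => - f c) (- L).
Proof.
move=> h; have := lim0_mul (lim0_cst (-1)) h.
by rewrite mulN1r; apply: lim0_ext => c _; rewrite mulN1r.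
Qed.

Lemma lim0_inv' {f L} : lim0 f L -> L != 0 -> lim0 (fun c => (f c)^-1) L^-1.
Proof. by move=> h L0; apply: lim0_inv. Qed.

Lemma lim0_exp {f L} k : lim0 f L -> lim0 (fun c => f c ^+ k) (L ^+ k).
Proof.
move=> h; elim: k => [|k IH].
  by apply: (lim0_ext (fun _ => 1)) => [c _|]; rewrite ?expr0 //; exact: lim0_cst.
have := lim0_mul h IH; rewrite -exprS; apply: lim0_ext => c _; by rewrite exprS.
Qed.

End Lim.

Ltac lim_auto :=
  first
  [ eassumption
  | apply: lim0_cst
  | apply: lim0_id
  | lazymatch goal with
    | |- lim0 (fun x => @?f x + @?g x) _ => eapply (@lim0_add _ f g _ _); [lim_auto | lim_auto]
    | |- lim0 (fun x => - @?f x) _ => eapply (@lim0_opp _ f _); lim_auto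
    | |- lim0 (fun x => @?f x * @?g x) _ => eapply (@lim0_mul _ f g _ _); [lim_auto|lim_auto]
    | |- lim0 (fun x => (@?f x)^-1) _ => eapply (@lim0_inv' _ f _); [lim_auto | ]
    | |- lim0 (fun x => (@?f x) ^+ ?k) _ => eapply (@lim0_exp _ f _ k); lim_auto
    end ].


Definition Fb (R : realFieldType) (n p : nat) (a s1 s2 c0 : R) : R :=
  let f0 := (p%:R - n%:R) / a + s1 in
  let f2 := (p%:R - n%:R) / a ^+ 2 + s2 in
  ((n%:R - 1) * p%:R - 2) - (p%:R - a * f0) *
    (((n%:R - p%:R - 1) * f0 + a * f0 ^+ 2) / (f0 - a * f2) - (2 * c0 + 1)).

Arguments Fb {R} n p a s1 s2 c0.

Section Ana.
Variables (R : realFieldType) (n p r : nat) (mu : 'I_n -> R).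
Hypothesis mu_ge0 : forall j, 0 <= mu j.
Hypothesis hr : (\sum_j (mu j != 0%R))%N = r.
Hypothesis r1 : (1 <= r)%N.
Hypothesis hK : (p%:R - r%:R) * (n%:R - 1 - r%:R) = 0 :> R.

Let F a c0 := Fb n p a (\sum_j (mu j + a)^-1) (\sum_j ((mu j + a)^-1) ^+ 2) c0.

Lemma r_sum : \sum_j ((mu j != 0)%:R : R) = r%:R.
Proof. by rewrite -hr natr_sum. Qed.

Lemma z_sum : \sum_j ((mu j == 0)%:R : R) = n%:R - r%:R.
Proof.
have : \sum_j ((mu j == 0)%:R + (mu j != 0)%:R) = n%:R :> R.
  rewrite (eq_bigr (fun _ => (1 : R))) ?sumr_const ?card_ord //.
  by move=> j _; case: (mu j == 0) => /=; rewrite ?addr0 ?add0r.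
rewrite big_split /= r_sum; lra.
Qed.

Lemma exists_pos : exists j, 0 < mu j.
Proof.
case/boolP: [exists j, mu j != 0] => [/existsP[j hj]|/existsPn h].
  by exists j; rewrite lt_def hj mu_ge0.
exfalso; move: hr r1; rewrite big1 // => [<- //|j _].
by have := h j; case: (mu j != 0).
Qed.


Let h j a := if mu j == 0 then 0 else (mu j + a)^-1.
Let s a := \sum_j h j a.
Let q a := \sum_j (h j a) ^+ 2.
Let K : R := p%:R - r%:R.

Lemma small_id a c0 : 0 < a -> F a c0 = ((n%:R - 1) * p%:R - 2) - (r%:R - a * s a) *
   (((n%:R - p%:R - 1 + 2 * K) * s a + a * s a ^+ 2) / (s a - a * q a) - (2 * c0 + 1)).
Proof.
move=> a_gt0; have a0 : a != 0 by rewrite gt_eqF.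
have e1 : \sum_j (mu j + a)^-1 = (n%:R - r%:R) / a + s a.
  rewrite -z_sum mulr_suml -big_split; apply: eq_bigr => j _ /=; rewrite /h.
  case: (eqVneq (mu j) 0) => [->|mj]; first by rewrite ?eqxx /= add0r mul1r addr0.
  by rewrite ?(negbTE mj) /= mul0r add0r.
have e2 : \sum_j ((mu j + a)^-1) ^+ 2 = (n%:R - r%:R) / a ^+ 2 + q a.
  rewrite -z_sum mulr_suml -big_split; apply: eq_bigr => j _ /=; rewrite /h.
  case: (eqVneq (mu j) 0) => [->|mj]; first by rewrite ?eqxx /= add0r mul1r expr0n /= addr0 exprVn.
  by rewrite ?(negbTE mj) /= mul0r add0r.
rewrite /F /Fb e1 e2 /=.
set ss := s a; set qq := q a.
have f0e : (p%:R - n%:R) / a + ((n%:R - r%:R) / a + ss) = K / a + ss.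
  by rewrite /K; field.
have f2e : (p%:R - n%:R) / a ^+ 2 + ((n%:R - r%:R) / a ^+ 2 + qq) = K / a ^+ 2 + qq.
  by rewrite /K; field.
rewrite f0e f2e.
have eA : p%:R - a * (K / a + ss) = r%:R - a * ss by rewrite /K; field.
have eD : K / a + ss - a * (K / a ^+ 2 + qq) = ss - a * qq by field.
have eN : (n%:R - p%:R - 1) * (K / a + ss) + a * (K / a + ss) ^+ 2 =
  (n%:R - p%:R - 1 + 2 * K) * ss + a * ss ^+ 2 + (p%:R - r%:R) * (n%:R - 1 - r%:R) / a.
  by rewrite /K; field.
by rewrite eA eD eN hK mul0r addr0.
Qed.


Let T := \sum_j h j 0.

Lemma h0_ge0 j : 0 <= h j 0.
Proof.
rewrite /h; case: eqP => // _; rewrite addr0 invr_ge0; exact: mu_ge0.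
Qed.

Lemma T_pos : 0 < T.
Proof.
have [j hj] := exists_pos.
rewrite /T (bigD1 j) //=; apply: (lt_le_trans (y := h j 0)).
  by rewrite /h gt_eqF //= addr0 invr_gt0.
by rewrite lerDl sumr_ge0 // => i _; exact: h0_ge0.
Qed.

Lemma lim_h j : lim0 (h j) (h j 0).
Proof.
rewrite /h; case: eqVneq => mj; first exact: lim0_cst.
apply: lim0_inv; first by rewrite addr0.
apply: lim0_add; [exact: lim0_cst | exact: lim0_id].
Qed.

Lemma lim_s : lim0 s T.
Proof. rewrite /s /T; apply: lim0_sum => j; exact: lim_h. Qed.

Lemma lim_q : lim0 q (\sum_j (h j 0) ^+ 2).
Proof. rewrite /q; apply: lim0_sum => j; exact: lim0_exp (lim_h j). Qed.

Lemma small_lim (c0f : R -> R) : lim0 c0f 0 ->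
  lim0 (fun a => F a (c0f a))
    (((n%:R - 1) * p%:R - 2) - r%:R * (n%:R - p%:R - 1 + 2 * K - 1)).
Proof.
move=> hc.
apply: (lim0_ext (fun a => ((n%:R - 1) * p%:R - 2) - (r%:R - a * s a) *
   (((n%:R - p%:R - 1 + 2 * K) * s a + a * s a ^+ 2) / (s a - a * q a) - (2 * c0f a + 1)))).
  by move=> c c0; rewrite small_id.
have hs := lim_s; have hq := lim_q; have Tp := T_pos.
eapply lim0_eq; last first.
  lim_auto.
all: rewrite ?mul0r ?subr0 ?addr0 ?gt_eqF //.
by rewrite mulfK ?gt_eqF // mulr0 add0r.
Qed.


Let g1 u := \sum_j mu j * (1 + mu j * u)^-1.
Let g2 u := \sum_j mu j * ((1 + mu j * u)^-1) ^+ 2.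
Let m := \sum_j mu j.

Lemma m_pos : 0 < m.
Proof.
have [j hj] := exists_pos.
rewrite /m (bigD1 j) //=; apply: (lt_le_trans hj).
by rewrite lerDl sumr_ge0.
Qed.

Lemma den_pos j u : 0 <= u -> 0 < 1 + mu j * u.
Proof. by move=> u0; rewrite ltr_pwDl // mulr_ge0. Qed.

Lemma g2_pos u : 0 <= u -> 0 < g2 u.
Proof.
move=> u0; have [j hj] := exists_pos.
rewrite /g2 (bigD1 j) //=; apply: (lt_le_trans (y := mu j * ((1 + mu j * u)^-1) ^+ 2)).
  by rewrite mulr_gt0 // exprn_gt0 // invr_gt0 den_pos.
rewrite lerDl sumr_ge0 // => i _; rewrite mulr_ge0 // exprn_ge0 // invr_ge0 ltW //.
exact: den_pos.
Qed.

Lemma large_id u c0 : 0 < u -> F (u^-1) c0 = ((n%:R - 1) * p%:R - 2) -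
  g1 u * ((n%:R - p%:R - 1) * (p%:R - u * g1 u) + (p%:R - u * g1 u) ^+ 2) / g2 u
  + u * g1 u * (2 * c0 + 1).
Proof.
move=> u_gt0; have u0 : u != 0 by rewrite gt_eqF.
have hd j : 1 + mu j * u != 0 by rewrite gt_eqF // den_pos // ltW.
have hd' j : mu j + u^-1 != 0.
  by rewrite gt_eqF // ltr_wpDl ?mu_ge0 // invr_gt0.
have e1 : \sum_j (mu j + u^-1)^-1 = u * n%:R - u ^+ 2 * g1 u.
  rewrite (eq_bigr (fun j => u - u ^+ 2 * (mu j * (1 + mu j * u)^-1))); last first.
    by move=> j _; field; rewrite ?hd ?hd' ?u0.
  by rewrite sumrB sumr_const card_ord -mulr_sumr mulr_natr.
have e2 : \sum_j ((mu j + u^-1)^-1) ^+ 2 = u ^+ 2 * n%:R - u ^+ 3 * g1 u - u ^+ 3 * g2 u.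
  rewrite (eq_bigr (fun j => u ^+ 2 - u ^+ 3 * (mu j * (1 + mu j * u)^-1)
     - u ^+ 3 * (mu j * ((1 + mu j * u)^-1) ^+ 2))); last first.
    by move=> j _; field; rewrite ?hd ?hd' ?u0.
  by rewrite !sumrB sumr_const card_ord -!mulr_sumr mulr_natr.
have g2p := g2_pos u (ltW u_gt0).
rewrite /F /Fb e1 e2 /=.
set G1 := g1 u; set G2 := g2 u.
have f0e : (p%:R - n%:R) / u^-1 + (u * n%:R - u ^+ 2 * G1) = u * (p%:R - u * G1).
  by field.
rewrite f0e.
have eD : u * (p%:R - u * G1) - u^-1 * ((p%:R - n%:R) / u^-1 ^+ 2 +
   (u ^+ 2 * n%:R - u ^+ 3 * G1 - u ^+ 3 * G2)) = u ^+ 2 * G2 by field.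
have eA : p%:R - u^-1 * (u * (p%:R - u * G1)) = u * G1 by field.
rewrite eD eA.
by field; rewrite u0 gt_eqF.
Qed.


Lemma lim_g1 : lim0 g1 m.
Proof.
rewrite /g1 /m; apply: lim0_sum => j.
eapply lim0_eq; last first. lim_auto.
all: by rewrite ?mulr0 ?addr0 ?invr1 ?mulr1 ?oner_eq0.
Qed.

Lemma lim_g2 : lim0 g2 m.
Proof.
rewrite /g2 /m; apply: lim0_sum => j.
eapply lim0_eq; last first. lim_auto.
all: by rewrite ?mulr0 ?addr0 ?invr1 ?expr1n ?mulr1 ?oner_eq0.
Qed.

Lemma large_lim0 : lim0 (fun u => F (u^-1) 0) (-2).
Proof.
apply: (lim0_ext (fun u => ((n%:R - 1) * p%:R - 2) -
  g1 u * ((n%:R - p%:R - 1) * (p%:R - u * g1 u) + (p%:R - u * g1 u) ^+ 2) / g2 u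
  + u * g1 u * (2 * 0 + 1))).
  by move=> c c0; rewrite large_id.
have h1 := lim_g1; have h2 := lim_g2; have mp := m_pos.
eapply lim0_eq; last first.
  lim_auto.
all: rewrite ?mul0r ?subr0 ?addr0 ?gt_eqF //.
by field; rewrite gt_eqF.
Qed.

Lemma large_limc : lim0 (fun u => F (u^-1) (u * m)^-1) 0.
Proof.
have mp := m_pos.
apply: (lim0_ext (fun u => ((n%:R - 1) * p%:R - 2) -
  g1 u * ((n%:R - p%:R - 1) * (p%:R - u * g1 u) + (p%:R - u * g1 u) ^+ 2) / g2 u
  + (2 * g1 u * m^-1 + u * g1 u))).
  move=> c c0; rewrite large_id //; congr (_ + _).
  by field; rewrite !gt_eqF.
have h1 := lim_g1; have h2 := lim_g2.
eapply lim0_eq; last first.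
  lim_auto.
all: rewrite ?mul0r ?subr0 ?addr0 ?gt_eqF //.
by field; rewrite gt_eqF.
Qed.

End Ana.

Lemma rank_diag (F : fieldType) n (d : 'rV[F]_n) :
  \rank (diag_mx d) = (\sum_(j < n) (d ord0 j != 0%R))%N.
Proof.
elim: n d => [|n IH] d.
  by rewrite big_ord0 flatmx0 mxrank0.
pose d' : 'rV[F]_(1 + n) := d.
have -> : \rank (diag_mx d) = \rank (diag_mx d') by [].
have -> : (\sum_(j < n.+1) (d ord0 j != 0%R))%N = (\sum_(j < 1 + n) (d' ord0 j != 0%R))%N by [].
rewrite -[d']hsubmxK diag_mx_row rank_diag_block_mx IH big_split_ord /=.
congr (_ + _)%N; last by apply: eq_bigr => i _; rewrite row_mxEr.
rewrite big_ord1 row_mxEl.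
set l := lsubmx d'.
have [l0|l0] := eqVneq (l ord0 ord0) 0.
  have -> : diag_mx l = 0.
    apply/matrixP => i j; rewrite !ord1 !mxE; move: l0; rewrite /l mxE => ->.
    by rewrite mul0rn.
  by rewrite mxrank0.
rewrite mxrank_unit //.
by rewrite unitmxE det_diag big_ord1 unitfE.
Qed.

Lemma ker_nonzero {F : fieldType} {m} {A : 'M[F]_m} : A \notin unitmx ->
  exists2 u : 'rV[F]_m, u != 0 & u *m A = 0.
Proof.
rewrite -row_free_unit => nf.
have : (0 < \rank (kermx A))%N.
  by rewrite mxrank_ker subn_gt0 ltn_neqAle rank_leq_row andbT.
rewrite lt0n mxrank_eq0 => /matrix0Pn[i [j Kij]].
exists (row i (kermx A)); last by rewrite -row_mul mulmx_ker row0.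
apply/eqP => /rowP/(_ j); rewrite [row _ _ _ _]mxE [(0 : 'rV[F]_m) _ _]mxE => e.
by move: Kij; rewrite e eqxx.
Qed.

Lemma rank_mulunit (F : fieldType) m (U A : 'M[F]_m) : U \in unitmx ->
  \rank (U *m A) = \rank A.
Proof.
move=> Uu; rewrite -mxrank_tr trmx_mul mxrankMfree ?mxrank_tr //.
by rewrite row_free_unit unitmx_tr.
Qed.

Lemma sqnorm_pos (F : realFieldType) m (u : 'rV[F]_m) : u != 0 -> 0 < (u *m u^T) 0 0.
Proof.
move=> /eqP u0; have [j uj] : exists j, u 0 j != 0.
  case/boolP: [exists j, u 0 j != 0] => [/existsP//|/existsPn h]; exfalso.
  by apply: u0; apply/rowP => j; rewrite mxE; apply/eqP; have := h j; rewrite negbK.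
rewrite mxE (bigD1 j) //= !mxE.
apply: (lt_le_trans (y := u 0 j * u 0 j)); first by rewrite -expr2 exprn_even_gt0.
rewrite lerDl sumr_ge0 // => i _; rewrite mxE -expr2 sqr_ge0 //.
Qed.

Lemma real_sym_diag (R : rcfType) n (M : 'M[R]_n) : M^T = M ->
  exists (P : 'M[R[i]]_n) (mu : 'rV[R]_n), P \in unitmx /\
    map_mx (real_complex R) M = invmx P *m diag_mx (map_mx (real_complex R) mu) *m P.
Proof.
move=> Msym.
set MC := map_mx (real_complex R) M.
have Mreal : MC \is a realmx.
  by apply/mxOverP => i j; rewrite mxE complex_real.
have Msy : MC \is symmetricmx.
  apply/is_hermitianmxP; rewrite expr0 scale1r.
  by apply/matrixP => i j; rewrite !mxE /= -[in LHS]Msym mxE.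
have Mh := realsym_hermsym Msy Mreal.
have Mn := symmetric_normalmx Msy Mreal.
have dreal := hermitian_spectral_diag_real Mh.
exists (spectralmx MC), (map_mx (@complex.Re R) (spectral_diag MC)); split.
  exact: spectral_unit.
have -> : map_mx (real_complex R) (map_mx (@complex.Re R) (spectral_diag MC)) = spectral_diag MC.
  apply/matrixP => i j; rewrite !mxE; apply: RRe_real.
  exact: (mxOverP dreal).
exact/orthomx_spectralP.
Qed.

Section Mat.
Variable R : rcfType.
Variables (n p : nat) (Sigma : 'M[R]_p) (X : 'M[R]_(p, n)).
Hypothesis pd : posdef Sigma.

Lemma form_rowP m (A : 'M[R]_m) : posdef A ->
  forall u : 'rV[R]_m, u != 0 -> 0 < (u *m A *m u^T) 0 0.
Proof.
move=> [_ h] u u0.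
have uT : u^T != 0.
  by rewrite trmx_eq0.
by have := h u^T uT; rewrite trmxK.
Qed.

Lemma posdef_unit m (A : 'M[R]_m) : posdef A -> A \in unitmx.
Proof.
move=> hA; rewrite -row_free_unit; apply/negPn/negP => nf.
have : (0 < \rank (kermx A))%N.
  by rewrite mxrank_ker subn_gt0 ltn_neqAle rank_leq_row andbT.
rewrite lt0n mxrank_eq0 => /matrix0Pn[i [j Kij]].
set u := row i (kermx A).
have u0 : u != 0.
  apply/eqP => /rowP/(_ j); rewrite /u [row _ _ _ _]mxE [(0 : 'rV[R]_m) _ _]mxE => e.
  by move: Kij; rewrite e eqxx.
have := @form_rowP _ A hA u u0.
by rewrite /u -row_mul mulmx_ker row0 mul0mx mxE ltxx.
Qed.

Let S := invmx Sigma.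
Let Cm := centered X.
Let B := Cm^T *m S.
Let M := B *m Cm.

Lemma S_sym : S^T = S.
Proof. by rewrite /S trmx_inv pd.1. Qed.

Lemma S_form (u : 'rV[R]_p) : u != 0 -> 0 < (u *m S *m u^T) 0 0.
Proof.
move=> u0; have Su := @posdef_unit _ Sigma pd.
set w := u *m S.
have uw : u = w *m Sigma by rewrite /w /S mulmxKV.
have w0 : w != 0 by apply: contraNneq u0 => w0; rewrite uw w0 mul0mx.
have -> : u *m S *m u^T = w *m Sigma *m w^T.
  by rewrite -/w {1}uw trmx_mul pd.1 mulmxA.
exact: (@form_rowP _ Sigma pd).
Qed.

Lemma M_form (u : 'rV[R]_n) :
  u *m M *m u^T = (u *m Cm^T) *m S *m (u *m Cm^T)^T.
Proof. by rewrite /M /B !mulmxA trmx_mul trmxK !mulmxA. Qed.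

Lemma M_sym : M^T = M.
Proof. by rewrite /M /B !trmx_mul trmxK S_sym mulmxA. Qed.

Lemma M_ge0 (u : 'rV[R]_n) : 0 <= (u *m M *m u^T) 0 0.
Proof.
rewrite M_form; have [->|v0] := eqVneq (u *m Cm^T) 0.
  by rewrite mul0mx mul0mx mxE.
exact/ltW/(@S_form _ v0).
Qed.

Lemma M_eq0 (u : 'rV[R]_n) : (u *m M *m u^T) 0 0 = 0 -> u *m Cm^T = 0.
Proof.
rewrite M_form => h; apply/eqP; apply: contraTT isT => v0.
by have := @S_form _ v0; rewrite h ltxx.
Qed.

Lemma rank_M : \rank M = \rank Cm.
Proof.
apply/eqP; rewrite eqn_leq; apply/andP; split.
  by rewrite /M mxrankM_maxr.
rewrite -mxrank_tr.
have sub : (kermx M <= kermx Cm^T)%MS.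
  apply/sub_kermxP; apply/row_matrixP => i; rewrite row_mul row0.
  apply: M_eq0; apply/eqP; rewrite -row_mul mulmx_ker row0 mul0mx mxE //.
have := mxrankS sub; rewrite !mxrank_ker.
have := rank_leq_row M; have := rank_leq_row Cm^T.
move: (\rank M) (\rank Cm^T) => a b; lia.
Qed.


Lemma W_eq : Wmat Sigma X = Cm *m B.
Proof. by rewrite /Wmat /B mulmxA. Qed.

Lemma push (a : R) : a != 0 -> (M + a%:M) \in unitmx ->
  [/\ (Wmat Sigma X + a%:M) \in unitmx,
      \tr (Vmat (Wmat Sigma X) a) = (p%:R - n%:R) / a + \tr (invmx (M + a%:M)) &
      \tr (Vmat (Wmat Sigma X) a *m Vmat (Wmat Sigma X) a) =
        (p%:R - n%:R) / a ^+ 2 + \tr (invmx (M + a%:M) *m invmx (M + a%:M))].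
Proof.
move=> a0 Mu.
set Xa := invmx (M + a%:M).
set W := Wmat Sigma X.
set Y := Cm *m Xa *m B.
have XM : Xa *m M = 1%:M - a *: Xa.
  apply/eqP; rewrite eq_sym subr_eq -mul_mx_scalar -mulmxDr mulVmx //.
have WC : (W + a%:M) *m Cm = Cm *m (M + a%:M).
  by rewrite /W W_eq mulmxDl mulmxDr scalar_mxC /M /B !mulmxA.
have hWY : (W + a%:M) *m Y = W.
  by rewrite /Y !mulmxA WC -(mulmxA Cm) mulmxV // mulmx1 /W W_eq /B !mulmxA.
set Z := a^-1 *: (1%:M - Y).
have hZ : (W + a%:M) *m Z = 1%:M.
  rewrite /Z -scalemxAr mulmxBr mulmx1 hWY addrAC subrr add0r.
  by rewrite -[a%:M]scalemx1 scalerA mulVf // scale1r.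
have [Wu _] := mulmx1_unit hZ.
have VZ : Vmat W a = Z.
  by rewrite /Vmat -[RHS](mulKmx Wu) hZ mulmx1.
have trY : \tr Y = n%:R - a * \tr Xa.
  rewrite /Y -mulmxA mxtrace_mulC -mulmxA XM mxtraceD mxtrace1 raddfN /=.
  by rewrite mxtraceZ.
have trYY : \tr (Y *m Y) = n%:R - 2%:R * a * \tr Xa + a ^+ 2 * \tr (Xa *m Xa).
  have -> : Y *m Y = Cm *m (Xa *m M *m Xa *m B).
    by rewrite /Y /M !mulmxA.
  rewrite mxtrace_mulC.
  have -> : Xa *m M *m Xa *m B *m Cm = (Xa *m M) *m (Xa *m M) by rewrite /M !mulmxA.
  rewrite XM mulmxBl mul1mx -scalemxAl mulmxBr mulmx1 -scalemxAr.
  rewrite !raddfB /= !mxtraceZ mxtrace1. ring.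
split => //.
  rewrite VZ /Z mxtraceZ raddfB /= mxtrace1 trY; by field; rewrite ?a0.
rewrite VZ /Z -scalemxAl -scalemxAr scalerA mxtraceZ mulmxBl mul1mx mulmxBr mulmx1.
rewrite !raddfB /= mxtrace1 trY trYY; by field; rewrite ?a0.
Qed.

Lemma diag_mul (F : comPzRingType) m (d e : 'rV[F]_m) :
  diag_mx d *m diag_mx e = diag_mx (\row_j (d 0 j * e 0 j)).
Proof.
apply/matrixP => i j; rewrite mul_diag_mx !mxE.
by case: (i == j); rewrite ?mulr1n ?mulr0n ?mulr0.
Qed.

Section Diag.
Local Notation toC := (real_complex R).
Variables (P : 'M[R[i]]_n) (mu : 'rV[R]_n).
Hypothesis Pu : P \in unitmx.
Hypothesis Md : map_mx toC M = invmx P *m diag_mx (map_mx toC mu) *m P.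
Let D (e : 'rV[R]_n) := invmx P *m diag_mx (map_mx toC e) *m P.

Lemma D_mul e f : D e *m D f = D (\row_j (e 0 j * f 0 j)).
Proof.
rewrite /D !mulmxA (mulmxK Pu) -[_ *m diag_mx _ *m diag_mx _]mulmxA diag_mul.
by congr (_ *m diag_mx _ *m _); apply/rowP => j; rewrite !mxE rmorphM.
Qed.

Lemma D_tr e : \tr (D e) = toC (\sum_j e 0 j).
Proof.
rewrite /D mxtrace_mulC mulmxA (mulmxV Pu) mul1mx mxtrace_diag rmorph_sum.
by apply: eq_bigr => j _; rewrite mxE.
Qed.

Lemma D_add e f : D e + D f = D (e + f).
Proof. by rewrite /D -mulmxDl -mulmxDr map_mxD -raddfD. Qed.

Lemma D_cst a : (toC a)%:M = D (const_mx a).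
Proof.
rewrite /D map_const_mx diag_const_mx mul_mx_scalar -scalemxAl (mulVmx Pu).
by rewrite scalemx1.
Qed.

Lemma D_rank e : \rank (D e) = (\sum_j (e ord0 j != 0%R))%N.
Proof.
rewrite /D mxrankMfree ?row_free_unit // rank_mulunit ?unitmx_inv //.
rewrite rank_diag; apply: eq_bigr => j _; rewrite mxE.
by rewrite (inj_eq (@complexI R)).
Qed.

Lemma D_notunit (e : 'rV[R]_n) (j : 'I_n) : e 0 j = 0 -> D e \notin unitmx.
Proof.
move=> ej; rewrite /D !unitmx_mul unitmx_inv Pu andbT /=.
rewrite unitmxE det_diag (bigD1 j) //= mxE ej rmorph0 mul0r.
by rewrite unitr0.
Qed.

Lemma Md' : map_mx toC M = D mu.
Proof. exact: Md. Qed.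

Lemma count_mu : (\sum_j (mu ord0 j != 0%R))%N = \rank Cm.
Proof. by rewrite -D_rank -Md' mxrank_map rank_M. Qed.

Lemma tr_M : \tr M = \sum_j mu 0 j.
Proof. by apply: (@complexI R); rewrite -trace_map_mx Md' D_tr. Qed.

Lemma mu_ge0 (j : 'I_n) : 0 <= mu 0 j.
Proof.
set a := mu 0 j.
have nu : (M - a%:M) \notin unitmx.
  rewrite -(map_unitmx toC) map_mxB map_scalar_mx /= Md' D_cst.
  have -> : D mu - D (const_mx a) = D (mu - const_mx a).
    rewrite -D_add; congr (_ + _); rewrite /D map_mxN raddfN /=. by rewrite mulmxN mulNmx.
  by apply: (@D_notunit _ j); rewrite !mxE subrr.
have [u u0 hu] := ker_nonzero nu.
have uM : u *m M = a *: u.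
  by apply/eqP; rewrite -subr_eq0 -mul_mx_scalar -mulmxBr hu.
have := M_ge0 u; rewrite uM -scalemxAl mxE.
by rewrite pmulr_lge0 // sqnorm_pos.
Qed.

Lemma trX (a : R) : (forall j, mu 0 j + a != 0) ->
  [/\ (M + a%:M) \in unitmx,
      \tr (invmx (M + a%:M)) = \sum_j (mu 0 j + a)^-1 &
      \tr (invmx (M + a%:M) *m invmx (M + a%:M)) = \sum_j ((mu 0 j + a)^-1)^+2].
Proof.
move=> ha.
set e := mu + const_mx a.
have hmap : map_mx toC (M + a%:M) = D e.
  by rewrite map_mxD map_scalar_mx /= Md' D_cst D_add.
set e' := \row_j (e 0 j)^-1.
have h1 : D e' *m D e = 1%:M.
  rewrite D_mul -(rmorph1 toC) D_cst; congr D; apply/rowP => j.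
  by rewrite !mxE mulVf // -[mu 0 j + a]/(e 0 j) ?mxE.
have [_ u2] := mulmx1_unit h1.
have hinv : invmx (D e) = D e' by rewrite -[LHS]mul1mx -h1 (mulmxK u2).
have hu : (M + a%:M) \in unitmx by rewrite -(map_unitmx toC) hmap.
split => //.
  apply: (@complexI R); rewrite -trace_map_mx map_invmx hmap hinv D_tr.
  by congr toC; apply: eq_bigr => j _; rewrite !mxE.
apply: (@complexI R); rewrite -trace_map_mx map_mxM map_invmx hmap hinv D_mul D_tr.
by congr toC; apply: eq_bigr => j _; rewrite !mxE expr2.
Qed.

Lemma bS_F (a c0 : R) : 0 < a ->
  bS n p (Wmat Sigma X) a c0 =
  Fb n p a (\sum_j (mu 0 j + a)^-1) (\sum_j ((mu 0 j + a)^-1) ^+ 2) c0.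
Proof.
move=> a_gt0; have a0 : a != 0 by rewrite gt_eqF.
have ha j : mu 0 j + a != 0 by rewrite gt_eqF // ltr_wpDl // mu_ge0.
have [Mu trXe trXXe] := trX a ha.
have [Wu trVe trVVe] := push a a0 Mu.
rewrite /bS /aS /=.
set W := Wmat Sigma X; set V := Vmat W a.
have VW : V *m W = 1%:M - a *: V.
  apply/eqP; rewrite eq_sym subr_eq -mul_mx_scalar -mulmxDr /V /Vmat mulVmx //.
have t1 : \tr (V *m W) = p%:R - a * \tr V by rewrite VW raddfB /= mxtrace1 mxtraceZ.
have t2 : \tr (V *m V *m W) = \tr V - a * \tr (V *m V).
  by rewrite -mulmxA VW mulmxBr mulmx1 -scalemxAr raddfB /= mxtraceZ.
rewrite t1 t2 trVe trVVe trXe trXXe /Fb.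
by [].
Qed.

End Diag.

End Mat.

Theorem proposition4 (R : rcfType) (n p : nat) (Sigma : 'M[R]_p) (X : 'M[R]_(p, n)) :
  (2 <= n)%N -> (1 <= p)%N -> posdef Sigma ->
  1 < `|n%:R - p%:R - 1 : R| ->
  (* the almost-sure event: X - Xbar has its generic rank min(n-1, p) *)
  \rank (centered X) = minn n.-1 p ->
  let W := Wmat Sigma X in
  let L0 := Num.min ((n%:R - 1) ^+ 2 + (n%:R - 1) - 2) (p%:R ^+ 2 + p%:R - 2) in
  [/\ lim0 (fun c => bS n p W c 0) L0,
      lim0 (fun c => bS n p W (c * \tr W) c) L0,
      liminfty (fun c => bS n p W c 0) (-2)
    & liminfty (fun c => bS n p W (c * \tr W) c) 0].
Proof.
move=> n2 p1 pd _ hrank W L0.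
have [P [mu [Pu Md]]] := @real_sym_diag R _ _ (@M_sym R n p Sigma X pd).
set r := minn n.-1 p.
pose mu' : 'I_n -> R := fun j => mu 0 j.
have hge0 : forall j, 0 <= mu' j by move=> j; exact: (@mu_ge0 R n p Sigma X pd P mu Pu Md).
have hr : (\sum_j (mu' j != 0%R))%N = r.
  by rewrite /r -hrank -(@count_mu R n p Sigma X pd P mu Pu Md).
have r1 : (1 <= r)%N by rewrite /r; lia.
have n1 : (n.-1)%:R = n%:R - 1 :> R by rewrite -subn1 natrB // ltnW.
have hK : (p%:R - r%:R) * (n%:R - 1 - r%:R) = 0 :> R.
  rewrite /r; case: (leqP n.-1 p) => h.
    by rewrite n1 subrr mulr0.
  by rewrite subrr mul0r.
have trW : \tr W = \sum_j mu' j.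
  by rewrite /W W_eq mxtrace_mulC -(@tr_M R n p Sigma X P mu Pu Md).
have mp : 0 < \sum_j mu' j by exact: (@m_pos R n r mu' hge0 hr r1).
have Lsm : ((n%:R - 1) * p%:R - 2) - r%:R * (n%:R - p%:R - 1 + 2 * (p%:R - r%:R) - 1) = L0 :> R.
  rewrite /L0 /r; case: (leqP n.-1 p) => h.
    rewrite n1 min_l; first by ring.
    have : (n.-1)%:R <= p%:R :> R by rewrite ler_nat.
    rewrite n1 => h'; have : 0 <= n%:R - 1 :> R by rewrite -n1 ler0n.
    nra.
  rewrite min_r; first by ring.
  have : p%:R <= (n.-1)%:R :> R by rewrite ler_nat ltnW.
  rewrite n1 => h'; have : 0 <= p%:R :> R by rewrite ler0n.
  nra.
set m := \sum_j mu' j in mp trW.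
have bSF a c0 : 0 < a -> bS n p W a c0 =
    Fb n p a (\sum_j (mu' j + a)^-1) (\sum_j ((mu' j + a)^-1) ^+ 2) c0.
  by move=> a0; rewrite (@bS_F R n p Sigma X pd P mu Pu Md).
split.
- have := @small_lim R n p r mu' hge0 hr r1 hK (fun _ => 0) (lim0_cst 0).
  rewrite Lsm; apply: lim0_ext => c c0.
  by rewrite bSF.
- have hc : lim0 (fun a : R => a / m) 0.
    eapply lim0_eq; last by lim_auto.
    by rewrite mul0r.
  have := lim0_scale m mp (@small_lim R n p r mu' hge0 hr r1 hK _ hc).
  rewrite Lsm; apply: lim0_ext => c c0.
  by rewrite trW bSF ?mulr_gt0 // mulfK // gt_eqF.
- apply: liminfty_lim0.
  have := @large_lim0 R n p r mu' hge0 hr r1.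
  apply: lim0_ext => c c0.
  by rewrite bSF // invr_gt0.
- apply: liminfty_lim0.
  have mi : 0 < m^-1 by rewrite invr_gt0.
  have := lim0_scale m^-1 mi (@large_limc R n p r mu' hge0 hr r1).
  apply: lim0_ext => c c0.
  rewrite trW bSF ?mulr_gt0 ?invr_gt0 //.
  by rewrite invfM invrK mulfVK // gt_eqF.
Qed.
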